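(* Let $L\in\mathbb{R}^{n\times n}$ be the Laplacian of an undirected unweighted graph on $n$ nodes, let $s \in \mathbb{R}^n$ be a mean-zero innate opinion vector and $z = (I+L)^{-1}s$. Let $(u,v)$ be an edge of the graph, $E = \chi_{u,v}\chi_{u,v}^T$ its edge Laplacian, and $\delta = z(u)-z(v)$. Then $$PD(L-E) \ge PD(L) + \delta^2.$$
   Context: $\chi_{u,v}\in\mathbb{R}^n$ is the vector with $1$ in coordinate $u$, $-1$ in coordinate $v$ and $0$ elsewhere. Friedkin–Johnsen model: expressed opinions $z=(I+L)^{-1}s$. With $s$ fixed, the polarization+disagreement of a graph with Laplacian $M$ is $PD(M) = s^T (I+M)^{-1} s$. *)

(* Defs.v *)
From mathcomp Require Import all_boot all_order all_algebra.
Set Implicit Arguments. Unset Strict Implicit. Unset Printing Implicit Defensive.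
Import Order.TTheory GRing.Theory Num.Theory.
Local Open Scope ring_scope.

Definition simple_graph (n : nat) (e : rel 'I_n) : Prop :=
  symmetric e /\ irreflexive e.

Definition laplacian (R : ringType) (n : nat) (e : rel 'I_n) : 'M[R]_n :=
  \matrix_(i, j) (if i == j then (#|[set k | e i k]|)%:R
                  else if e i j then -1 else 0).

Definition chi (R : ringType) (n : nat) (u v : 'I_n) : 'cV[R]_n :=
  \col_i ((i == u)%:R - (i == v)%:R).

Definition fj_opinions (R : comUnitRingType) (n : nat) (L : 'M[R]_n)
  (s : 'cV[R]_n) : 'cV[R]_n := invmx (1%:M + L) *m s.

Definition PD (R : comUnitRingType) (n : nat) (s : 'cV[R]_n) (M : 'M[R]_n) : R :=
  (s^T *m invmx (1%:M + M) *m s) ord0 ord0.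

(* Main.v *)
Require Import Defs.
From mathcomp Require Import all_boot all_order all_algebra.
From mathcomp.algebra_tactics Require Import ring lra.
Import Order.TTheory GRing.Theory Num.Theory.
Local Open Scope ring_scope.

Section S.
Context {R : realFieldType}.
Context {n : nat}.

Definition psd (K : 'M[R]_n) := forall x : 'cV[R]_n, 0 <= (x^T *m K *m x) 0 0.

Lemma quadE (K : 'M[R]_n) (x : 'cV[R]_n) :
  (x^T *m K *m x) 0 0 = \sum_i \sum_j x i 0 * K i j * x j 0.
Proof.
rewrite mxE exchange_big /=; apply eq_bigr => j _.
rewrite mxE big_distrl /=; apply eq_bigr => i _.
by rewrite !mxE.
Qed.

Lemma quad1 (x : 'cV[R]_n) : (x^T *m 1%:M *m x) 0 0 = \sum_i x i 0 ^+ 2.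
Proof.
rewrite mulmx1 mxE; apply eq_bigr => i _; by rewrite !mxE expr2.
Qed.

Lemma psd1 : psd 1%:M.
Proof. by move=> x; rewrite quad1; apply: sumr_ge0 => i _; apply: sqr_ge0. Qed.

Lemma psdD K1 K2 : psd K1 -> psd K2 -> psd (K1 + K2).
Proof.
move=> h1 h2 x; rewrite mulmxDr mulmxDl mxE; exact: addr_ge0.
Qed.

Lemma chiE (u v : 'I_n) (x : 'cV[R]_n) : ((chi R u v)^T *m x) 0 0 = x u 0 - x v 0.
Proof.
rewrite mxE.
under eq_bigr => i _ do rewrite !mxE mulrBl.
rewrite sumrB (bigD1 u) //= eqxx mul1r big1 ?addr0; last by move=> i /negbTE ->; rewrite mul0r.
rewrite (bigD1 v) //= eqxx mul1r big1 ?addr0 //; by move=> i /negbTE ->; rewrite mul0r.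
Qed.

Lemma quad_cct (c x : 'cV[R]_n) : (x^T *m (c *m c^T) *m x) 0 0 = ((c^T *m x) 0 0) ^+ 2.
Proof.
rewrite !mulmxA -mulmxA -[x^T *m c]trmxK trmx_mul trmxK.
by rewrite mxE big_ord1 !mxE expr2.

Qed.

Lemma psd_cct (c : 'cV[R]_n) : psd (c *m c^T).
Proof. by move=> x; rewrite quad_cct sqr_ge0. Qed.

Lemma unit_psd K : psd K -> (1%:M + K) \in unitmx.
Proof.
move=> hK; rewrite -unitmx_tr -row_free_unit; apply/inj_row_free => v Hv.
have H0 : (1%:M + K) *m v^T = 0.
  by apply/trmx_inj; rewrite trmx_mul trmxK Hv trmx0.
have : (v^T^T *m (1%:M + K) *m v^T) 0 0 = 0 by rewrite -mulmxA H0 mulmx0 mxE.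
rewrite mulmxDr mulmxDl mxE quad1 => hs.
have hK' := hK v^T.
have hs0 : \sum_i v^T i 0 ^+ 2 = 0.
  have : 0 <= \sum_i v^T i 0 ^+ 2 by apply: sumr_ge0 => i _; apply: sqr_ge0.
  lra.
apply/rowP => j; rewrite mxE.
have := psumr_eq0P (fun i _ => sqr_ge0 (v^T i 0)) hs0 (i := j) isT.
by rewrite mxE => /eqP; rewrite sqrf_eq0 => /eqP.
Qed.


Lemma degE (e : rel 'I_n) i : (#|[set k | e i k]|)%:R = \sum_k (e i k)%:R :> R.
Proof.
rewrite -sum1_card natr_sum big_mkcond /=; apply eq_bigr => k _.
by rewrite inE; case: (e i k).
Qed.

Lemma quadL (e : rel 'I_n) (x : 'cV[R]_n) : simple_graph e ->
  2 * (x^T *m laplacian R e *m x) 0 0 =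
  \sum_i \sum_j (e i j)%:R * (x i 0 - x j 0) ^+ 2.
Proof.
move=> [hsym hirr]; rewrite quadE.
have h1 : \sum_i \sum_j x i 0 * laplacian R e i j * x j 0 =
   \sum_i \sum_j (e i j)%:R * (x i 0 ^+ 2 - x i 0 * x j 0).
  apply eq_bigr => i _.
  rewrite (bigD1 i) //= [RHS](bigD1 i) //= hirr mul0r add0r !mxE eqxx degE.
  rewrite (bigD1 i) //= hirr add0r mulr_sumr mulr_suml -big_split /=.
  apply eq_bigr => j hj; rewrite !mxE eq_sym (negbTE hj).
  by case: (e i j); rewrite /= ?mulr1n ?mulr0n; ring.
have h2 : \sum_i \sum_j (e i j)%:R * (x i 0 ^+ 2 - x i 0 * x j 0) =
   \sum_i \sum_j (e i j)%:R * (x j 0 ^+ 2 - x j 0 * x i 0) :> R.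
  rewrite exchange_big; apply eq_bigr => i _; apply eq_bigr => j _.
  by rewrite hsym.
rewrite h1 mulr2n mulrDl mul1r {2}h2 -big_split; apply eq_bigr => i _.
rewrite -big_split; apply eq_bigr => j _ /=; ring.
Qed.

Lemma quadL_ge (e : rel 'I_n) (x : 'cV[R]_n) (u v : 'I_n) : simple_graph e ->
  e u v -> (x u 0 - x v 0) ^+ 2 <= (x^T *m laplacian R e *m x) 0 0.
Proof.
move=> hg huv; have := quadL e x hg; case: hg => hsym hirr.
have uv : u != v by apply/eqP => E; move: huv; rewrite E hirr.
set G := fun i j => (e i j)%:R * (x i 0 - x j 0) ^+ 2.
have G0 : forall i j, 0 <= G i j by move=> i j; apply: mulr_ge0; [exact: ler0n | exact: sqr_ge0].
have hrow : forall i j, G i j <= \sum_k G i k.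
  move=> i j; rewrite (bigD1 j) //= lerDl; exact: sumr_ge0.
have : \sum_k G u k + \sum_k G v k <= \sum_i \sum_j G i j.
  set F := fun i => \sum_k G i k.
  have F0 : forall i, 0 <= F i by move=> i; exact: sumr_ge0.
  change (F u + F v <= \sum_i F i).
  rewrite [leRHS](bigD1 u) // [X in _ <= _ + X](bigD1 v) 1?eq_sym // addrA lerDl; exact: sumr_ge0.
have := hrow u v; have := hrow v u.
rewrite /G (hsym v u) huv /= => h1 h2 h3 h4.
have : (x v 0 - x u 0) ^+ 2 = (x u 0 - x v 0) ^+ 2 by ring.
rewrite -/(G _ _) in h4. lra.
Qed.


Lemma entryDZ (X Y : 'M[R]_(1,1)) (d : R) : (X + d *: Y) 0 0 = X 0 0 + d * Y 0 0.
Proof. by rewrite [LHS]mxE [X in _ + X]mxE. Qed.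

Lemma lap_sym (e : rel 'I_n) : simple_graph e -> (laplacian R e)^T = laplacian R e.
Proof.
move=> [hsym _]; apply/matrixP => i j; rewrite !mxE eq_sym.
by case: eqP => [->|_] //; rewrite (hsym j i).
Qed.

Lemma psd_LmE (e : rel 'I_n) (u v : 'I_n) : simple_graph e -> e u v ->
  psd (laplacian R e - chi R u v *m (chi R u v)^T).
Proof.
move=> hg huv x.
have h2 := @quadL_ge e x u v hg huv; have h1 := quad_cct (chi R u v) x.
rewrite chiE in h1.
rewrite mulmxBr mulmxBl !mxE.
rewrite !mxE in h1 h2. lra.
Qed.

End S.

Theorem mainTheorem6 (R : realFieldType) (n : nat) (e : rel 'I_n)
  (s : 'cV[R]_n) (u v : 'I_n) :
  simple_graph e ->
  \sum_i s i ord0 = 0 ->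
  e u v ->
  let L := laplacian R e in
  let E := chi R u v *m (chi R u v)^T in
  let z := fj_opinions L s in
  let delta := z u ord0 - z v ord0 in
  PD s (L - E) >= PD s L + delta ^+ 2.
Proof.
move=> hg _ huv.
rewrite /PD /fj_opinions.
set c := chi R u v.
set L := laplacian R e.
have psdLE : psd (L - c *m c^T) by exact: psd_LmE.
have psdL : psd L by rewrite -(subrK (c *m c^T) L); apply: psdD => //; exact: psd_cct.
set A := 1%:M + (L - c *m c^T).
set B := 1%:M + L.
have hA : A \in unitmx by exact: unit_psd.
have hB : B \in unitmx by exact: unit_psd.
have symA : A^T = A.
  by rewrite /A !raddfD /= raddfN /= tr_scalar_mx trmx_mul trmxK lap_sym.
have hBA : B = A + c *m c^T by rewrite /A /B -addrA subrK.
set z := invmx B *m s.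
set delta := z u 0 - z v 0.
have hd : delta = (c^T *m z) 0 0 by rewrite chiE.
have hs : A *m z + delta *: c = s.
  by rewrite hd -mul_mx_scalar -mx11_scalar (mulmxA c) -mulmxDl -hBA /z mulKVmx.
have hy : invmx A *m s = z + delta *: (invmx A *m c).
  by rewrite -hs mulmxDr mulKmx // scalemxAr.
have t : (s^T *m (invmx A *m c)) 0 0 = (c^T *m (invmx A *m s)) 0 0.
  transitivity ((s^T *m (invmx A *m c))^T 0 0); first by rewrite [RHS]mxE.
  by rewrite !trmx_mul trmxK trmx_inv symA mulmxA.
have ha : 0 <= (c^T *m (invmx A *m c)) 0 0.
  have hw : A *m (invmx A *m c) = c by rewrite mulKVmx.
  rewrite -{1}hw trmx_mul symA.
  have pA : psd A by apply: psdD => //; exact: psd1.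
  exact: pA.
rewrite -!mulmxA -/z hy mulmxDr -scalemxAr entryDZ t hy mulmxDr -scalemxAr entryDZ -hd.
have := mulr_ge0 (sqr_ge0 delta) ha.
nra.
Qed.
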